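(* Let $N\ge 1$ and let $\mathbf{Z}_{\mathrm{SS}}\in\mathbb{C}^{N\times N}$, $z_{\mathrm{G}},z_{\mathrm{L}},z_{\mathrm{TT}},z_{\mathrm{RR}},z_{\mathrm{TR}}\in\mathbb{C}$, row vectors $\mathbf{z}_{\mathrm{TS}},\mathbf{z}_{\mathrm{RS}}\in\mathbb{C}^{1\times N}$ and column vectors $\mathbf{z}_{\mathrm{ST}},\mathbf{z}_{\mathrm{SR}}\in\mathbb{C}^{N\times 1}$ be fixed, and let $R_0\ge 0$. For a real vector $\mathbf{z}_{\mathrm{RIS,Im}}\in\mathbb{R}^{N}$ put $\mathbf{z}_{\mathrm{RIS}}=R_0\mathbf{1}+j\,\mathbf{z}_{\mathrm{RIS,Im}}\in\mathbb{C}^N$ (so every entry of $\mathbf{z}_{\mathrm{RIS}}$ has real part $R_0$) and $$\mathbf{Z}_{\mathrm{SE}}=\mathbf{Z}_{\mathrm{SS}}+\mathrm{diag}(\mathbf{z}_{\mathrm{RIS}}),$$ $$\phi_{\mathrm{KL}}=z_{\mathrm{KL}}-\mathbf{z}_{\mathrm{KS}}\mathbf{Z}_{\mathrm{SE}}^{-1}\mathbf{z}_{\mathrm{SL}},\quad \mathrm{K},\mathrm{L}\in\{\mathrm{T},\mathrm{R}\},$$ $$\tilde{z}_{\mathrm{T}}=z_{\mathrm{G}}+\phi_{\mathrm{TT}},\qquad \tilde{z}_{\mathrm{R}}=z_{\mathrm{L}}+\phi_{\mathrm{RR}},\qquad a=\bigl(\tilde{z}_{\mathrm{T}}\tilde{z}_{\mathrm{R}}-\phi_{\mathrm{TR}}^{2}\bigr)^{-1},$$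 $$h_{\mathrm{E2E}}=\frac{z_{\mathrm{L}}\phi_{\mathrm{TR}}}{\tilde{z}_{\mathrm{T}}\tilde{z}_{\mathrm{R}}-\phi_{\mathrm{TR}}^{2}},\qquad f(\mathbf{z}_{\mathrm{RIS}})=|h_{\mathrm{E2E}}|^{2},$$ at any $\mathbf{z}_{\mathrm{RIS,Im}}$ where $\mathbf{Z}_{\mathrm{SE}}$ is invertible and $\tilde{z}_{\mathrm{T}}\tilde{z}_{\mathrm{R}}-\phi_{\mathrm{TR}}^{2}\neq 0$. Then the gradient of $f$, regarded as a real-valued function of $\mathbf{z}_{\mathrm{RIS,Im}}\in\mathbb{R}^N$, is $$\nabla_{\mathbf{z}_{\mathrm{RIS,Im}}}f(\mathbf{z}_{\mathrm{RIS}})=2\,\mathfrak{I}\bigl(h_{\mathrm{E2E}}\,\mathrm{vec}_{d}(\mathbf{E}^{*})\bigr),$$ where $$\mathbf{E}=z_{\mathrm{L}}a\,\mathbf{Z}_{\mathrm{SE}}^{-1}\Bigl(\bigl(2a\phi_{\mathrm{TR}}^{2}+1\bigr)\mathbf{z}_{\mathrm{SR}}\mathbf{z}_{\mathrm{TS}}-a\phi_{\mathrm{TR}}\tilde{z}_{\mathrm{R}}\,\mathbf{z}_{\mathrm{ST}}\mathbf{z}_{\mathrm{TS}}-a\phi_{\mathrm{TR}}\tilde{z}_{\mathrm{T}}\,\mathbf{z}_{\mathrm{SR}}\mathbf{z}_{\mathrm{RS}}\Bigr)\mathbf{Z}_{\mathrm{SE}}^{-1}.$$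
   Context: This is the end-to-end transfer function of a SISO link assisted by a reconfigurable intelligent surface (RIS) with $N$ elements modeled as mutually coupled thin wire dipoles loaded by tunable impedances $\mathbf{z}_{\mathrm{RIS}}$. Here $\mathbf{Z}_{\mathrm{SS}}$ is the mutual impedance matrix among RIS elements, $z_{\mathrm{G}}$ the generator internal impedance, $z_{\mathrm{L}}$ the receiver load impedance, $z_{\mathrm{TT}},z_{\mathrm{RR}}$ the self impedances of the transmit and receive antennas, $z_{\mathrm{TR}}=z_{\mathrm{RT}}$ their mutual impedance, $\mathbf{z}_{\mathrm{TS}},\mathbf{z}_{\mathrm{RS}}$ (row vectors) the mutual impedances between the transmit/receive antenna and the RIS elements, and $\mathbf{z}_{\mathrm{ST}},\mathbf{z}_{\mathrm{SR}}$ (column vectors) the mutual impedances between the RIS elements and the transmit/receive antenna. $j$ is the imaginary unit, $\mathbf{1}$ is the all-ones vector, $(\cdot)^*$ denotes entrywise complex conjugation, $\mathfrak{I}(\cdot)$ is the entrywise imaginary part, $\mathrm{diag}(\mathbf{x})$ is the diagonal matrix with diagonal $\mathbf{x}$, and $\mathrm{vec}_d(\mathbf{X})$ is the column vector of diagonal entries of the square matrix $\mathbf{X}$. *)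

(* Defs.v *)
From HB Require Import structures.
From mathcomp Require Import all_boot all_order all_algebra.
From mathcomp Require Import all_classical all_reals all_analysis.
From mathcomp Require Import complex.
Set Implicit Arguments. Unset Strict Implicit. Unset Printing Implicit Defensive.
Import Order.TTheory GRing.Theory Num.Theory.
Local Open Scope ring_scope.
Local Open Scope complex_scope.

Section Defs.
Variable R : realType.
Local Notation C := R[i].

Definition sqmod (h : C) : R := complex.Re h ^+ 2 + complex.Im h ^+ 2.

Definition zRIS (N : nat) (R0 : R) (x : 'rV[R]_N) : 'cV[C]_N :=
  \col_i (R0%:C + 'i * (x 0 i)%:C).

Definition ZSE (N : nat) (ZSS : 'M[C]_N) (R0 : R) (x : 'rV[R]_N) : 'M[C]_N :=
  ZSS + diag_mx (zRIS R0 x)^T.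

Definition phi (N : nat) (Zinv : 'M[C]_N) (zKL : C) (zKS : 'rV[C]_N)
  (zSL : 'cV[C]_N) : C := zKL - (zKS *m Zinv *m zSL) 0 0.

Definition hE2E (N : nat) (ZSS : 'M[C]_N) (zG zL zTT zRR zTR : C)
  (zTS zRS : 'rV[C]_N) (zST zSR : 'cV[C]_N) (R0 : R) (x : 'rV[R]_N) : C :=
  let Zi := invmx (ZSE ZSS R0 x) in
  let pTT := phi Zi zTT zTS zST in
  let pRR := phi Zi zRR zRS zSR in
  let pTR := phi Zi zTR zTS zSR in
  let zT := zG + pTT in
  let zR := zL + pRR in
  zL * pTR / (zT * zR - pTR ^+ 2).

Definition fE2E (N : nat) (ZSS : 'M[C]_N) (zG zL zTT zRR zTR : C)
  (zTS zRS : 'rV[C]_N) (zST zSR : 'cV[C]_N) (R0 : R) (x : 'rV[R]_N) : R :=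
  sqmod (hE2E ZSS zG zL zTT zRR zTR zTS zRS zST zSR R0 x).
End Defs.

(* Main.v *)
Require Import Defs.
From HB Require Import structures.
From mathcomp Require Import all_boot all_order all_algebra.
From mathcomp Require Import all_classical all_reals all_analysis.
From mathcomp Require Import complex.
From mathcomp Require Import ring lra.
Import Order.TTheory GRing.Theory Num.Theory.
Import numFieldNormedType.Exports.
Local Open Scope ring_scope.
Local Open Scope complex_scope.

Section All.
Set Implicit Arguments. Unset Strict Implicit.
Variable R : realType.
Local Notation C := R[i].
Local Notation Re := (@complex.Re R).
Local Notation Im := (@complex.Im R).


Lemma ZSE_shift N (ZSS : 'M[C]_N) R0 (x : 'rV[R]_N) j (t : R) :
  ZSE ZSS R0 (x + t *: delta_mx 0 j) = ZSE ZSS R0 x + (t%:C * 'i) *: delta_mx j j.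
Proof.
apply/matrixP => k l; rewrite /ZSE /zRIS !mxE.
case: (eqVneq k l) => [<-|kl].
  rewrite !mulr1n andbb eqxx /= -addrA; congr (_ + _).
  case: (k == j); rewrite /= ?mulr1 ?mulr0 ?addr0 //.
  rewrite -addrA; congr (_ + _).
  apply/eqP; rewrite eq_complex /=.
  by rewrite !(mul0r, mul1r, mulr0, mulr1, subr0, sub0r, add0r, addr0) !eqxx.
rewrite !mulr0n !addr0.
case: (eqVneq k j) => [kj|kj]; last by rewrite /= mulr0 addr0.
by move: kl; rewrite kj eq_sym => /negbTE ->; rewrite /= mulr0 addr0.
Qed.

Lemma delta_sandwich N (A : 'M[C]_N) j :
  delta_mx j j *m A *m delta_mx j j = A j j *: delta_mx j j.
Proof.
apply/matrixP => k l; rewrite !mxE (bigD1 j) //= big1 => [|m mj]; last first.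
  by rewrite [delta_mx j j m l]mxE (negbTE mj) /= mulr0.
rewrite addr0 [delta_mx j j j l]mxE eqxx /= mxE (bigD1 j) //= big1 => [|m mj]; last first.
  by rewrite [delta_mx j j k m]mxE (negbTE mj) andbF mul0r.
rewrite addr0 mxE eqxx andbT.
by case: (k == j); case: (l == j); rewrite /= ?mulr1 ?mulr0 ?mul1r ?mul0r.
Qed.

Lemma sherman N (Z : 'M[C]_N) j (c : C) : Z \in unitmx -> 1 + c * (invmx Z) j j != 0 ->
  invmx (Z + c *: delta_mx j j) =
  invmx Z - (c / (1 + c * (invmx Z) j j)) *: (invmx Z *m delta_mx j j *m invmx Z).
Proof.
move=> Zu nz.
set Zi := invmx Z; set d := Zi j j; set s := c / (1 + c * d).
have key : (Z + c *: delta_mx j j) *m (Zi - s *: (Zi *m delta_mx j j *m Zi)) = 1%:M.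
  rewrite mulmxDl mulmxBr mulmxBr mulmxV // -!scalemxAl -!scalemxAr.
  rewrite !mulmxA mulmxV // mul1mx.
  have -> : delta_mx j j *m Zi *m delta_mx j j *m Zi = d *: (delta_mx j j *m Zi).
    by rewrite delta_sandwich -scalemxAl.
  rewrite !scalerA.
  have -> : c * s * d = c - s.
    rewrite /s; field. exact: nz.
  rewrite scalerBl; set M := delta_mx j j *m Zi.
  by rewrite opprB [c *: M + _]addrC subrK subrK.
have [Au _] := mulmx1_unit key.
by rewrite -[RHS]mul1mx -(mulVmx Au) -mulmxA key mulmx1.
Qed.

Lemma entry_cr N (P : 'cV[C]_N) (Q : 'rV[C]_N) j : (P *m Q) j j = P j 0 * Q 0 j.
Proof. by rewrite mxE big_ord1. Qed.

Lemma bil N (u : 'rV[C]_N) (A B : 'M[C]_N) (v : 'cV[C]_N) j :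
  (u *m (A *m delta_mx j j *m B) *m v) 0 0 = (u *m A) 0 j * (B *m v) j 0.
Proof.
rewrite -(mul_delta_mx (0 : 'I_1) j j) !mulmxA -colE -!mulmxA.
rewrite mxE big_ord1 mxE; congr (_ * _).
by rewrite mulmxA -rowE -row_mul mxE.
Qed.

Lemma phi_shift N (Zi : 'M[C]_N) s zKL zKS zSL j :
  phi (Zi - s *: (Zi *m delta_mx j j *m Zi)) zKL zKS zSL =
  phi Zi zKL zKS zSL + s * ((zKS *m Zi) 0 j * (Zi *m zSL) j 0).
Proof.
rewrite /phi mulmxBr mulmxBl -scalemxAr -scalemxAl.
have e : forall (M1 M2 : 'M[C]_1), (M1 - s *: M2) 0 0 = M1 0 0 - s * M2 0 0.
  by move=> M1 M2; rewrite !mxE.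
rewrite e bil.
by rewrite opprB addrA addrAC.
Qed.

Lemma Ejj N (Zi : 'M[C]_N) al be ga (zSR zST : 'cV[C]_N) (zTS zRS : 'rV[C]_N) j :
 (Zi *m (al *: (zSR *m zTS) - be *: (zST *m zTS) - ga *: (zSR *m zRS)) *m Zi) j j
 = al * ((Zi *m zSR) j 0 * (zTS *m Zi) 0 j) - be * ((Zi *m zST) j 0 * (zTS *m Zi) 0 j)
   - ga * ((Zi *m zSR) j 0 * (zRS *m Zi) 0 j).
Proof.
rewrite !mulmxBr !mulmxBl -!scalemxAr -!scalemxAl !mulmxA -!(mulmxA _ _ Zi).
have e : forall M1 M2 M3 : 'M[C]_N,
  (al *: M1 - be *: M2 - ga *: M3) j j = al * M1 j j - be * M2 j j - ga * M3 j j.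
  by move=> *; rewrite !mxE.
by rewrite e !entry_cr.
Qed.

Definition CD (c : R -> C) (c' : C) :=
  is_derive (0:R) (1:R) (fun t => Re (c t)) (Re c') /\
  is_derive (0:R) (1:R) (fun t => Im (c t)) (Im c').

Lemma CD_cst k : CD (fun _ => k) 0.
Proof. split; exact: is_derive_cst. Qed.

Lemma CD_id : CD (fun t => t%:C) 1.
Proof. split => /=; [exact: is_derive_id | exact: is_derive_cst]. Qed.

Lemma ReM (a b : C) : Re (a * b) = Re a * Re b - Im a * Im b.
Proof. by case: a => ? ?; case: b. Qed.
Lemma ImM (a b : C) : Im (a * b) = Re a * Im b + Im a * Re b.
Proof. by case: a => ? ?; case: b => ? ? /=; rewrite addrC. Qed.
Lemma ReD (a b : C) : Re (a + b) = Re a + Re b.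
Proof. by case: a => ? ?; case: b. Qed.
Lemma ImD (a b : C) : Im (a + b) = Im a + Im b.
Proof. by case: a => ? ?; case: b. Qed.

Lemma CD_add c d c' d' : CD c c' -> CD d d' -> CD (fun t => c t + d t) (c' + d').
Proof.
move=> [H1 H2] [H3 H4]; split.
  have -> : (fun t => Re (c t + d t)) = (fun t => Re (c t)) + (fun t => Re (d t)).
    by apply/funext => t; rewrite ReD.
  by rewrite ReD; exact: is_deriveD.
have -> : (fun t => Im (c t + d t)) = (fun t => Im (c t)) + (fun t => Im (d t)).
  by apply/funext => t; rewrite ImD.
by rewrite ImD; exact: is_deriveD.
Qed.

Lemma sE (a b : R) : a *: b = a * b. Proof. by []. Qed.

Lemma CD_mul c d c' d' : CD c c' -> CD d d' ->
  CD (fun t => c t * d t) (c' * d 0 + c 0 * d').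
Proof.
move=> [H1 H2] [H3 H4]; split.
  have -> : (fun t => Re (c t * d t)) = (fun t => Re (c t)) * (fun t => Re (d t))
     - (fun t => Im (c t)) * (fun t => Im (d t)).
    by apply/funext => t; rewrite ReM.
  by apply: is_derive_eq; rewrite ReD !ReM /= !sE; ring.
have -> : (fun t => Im (c t * d t)) = (fun t => Re (c t)) * (fun t => Im (d t))
   + (fun t => Im (c t)) * (fun t => Re (d t)).
  by apply/funext => t; rewrite ImM.
by apply: is_derive_eq; rewrite ImD !ImM /= !sE; ring.
Qed.

Lemma ReN (a : C) : Re (- a) = - Re a. Proof. by case: a. Qed.
Lemma ImN (a : C) : Im (- a) = - Im a. Proof. by case: a. Qed.
Lemma ReV (a : C) : Re (a^-1) = Re a / (Re a ^+ 2 + Im a ^+ 2).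
Proof. by case: a. Qed.
Lemma ImV (a : C) : Im (a^-1) = - (Im a / (Re a ^+ 2 + Im a ^+ 2)).
Proof. by case: a. Qed.
Lemma n2_neq0 (a : C) : a != 0 -> Re a ^+ 2 + Im a ^+ 2 != 0.
Proof.
case: a => p q nz; apply/negP; rewrite /= paddr_eq0 ?sqr_ge0 // !sqrf_eq0.
by case/andP => /eqP p0 /eqP q0; move/negP: nz; apply; rewrite p0 q0.
Qed.

Lemma CD_inv c c' : c 0 != 0 -> CD c c' ->
  CD (fun t => (c t)^-1) (- (c' * (c 0)^-1 * (c 0)^-1)).
Proof.
move=> nz [H1 H2].
set a := (fun t => Re (c t)) in H1 *; set b := (fun t => Im (c t)) in H2 *.
have Hn := is_deriveD (is_deriveM H1 H1) (is_deriveM H2 H2).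
have Hn0 : (a * a + b * b) 0 != 0.
  by move: (n2_neq0 nz); rewrite /= !expr2.
have HV := is_deriveV Hn0 Hn.
split.
  have -> : (fun t => Re (c t)^-1) = a * (fun t => ((a * a + b * b) t)^-1).
    by apply/funext => t; rewrite ReV /= !expr2.
  apply: is_derive_eq.
  rewrite (_ : (a*a+b*b) 0 = Re (c 0)^+2 + Im (c 0)^+2); last by rewrite /= !expr2.
  move: (n2_neq0 nz); rewrite /a /b /= !sE.
  clear HV Hn H1 H2; case: (c 0) => a0 b0; case: c' => p q => /= nn.

  by field.
have -> : (fun t => Im (c t)^-1) = - (b * (fun t => ((a * a + b * b) t)^-1)).
  by apply/funext => t; rewrite ImV /= !expr2.
apply: is_derive_eq.
rewrite (_ : (a*a+b*b) 0 = Re (c 0)^+2 + Im (c 0)^+2); last by rewrite /= !expr2.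
move: (n2_neq0 nz); rewrite /a /b /= !sE.
clear HV Hn H1 H2; case: (c 0) => a0 b0; case: c' => p q => /= nn.
by field.
Qed.

Lemma CD_opp c c' : CD c c' -> CD (fun t => - c t) (- c').
Proof.
move=> [H1 H2]; split.
  have -> : (fun t => Re (- c t)) = - (fun t => Re (c t)) by apply/funext => t; rewrite ReN.
  by rewrite ReN; exact: is_deriveN.
have -> : (fun t => Im (- c t)) = - (fun t => Im (c t)) by apply/funext => t; rewrite ImN.
by rewrite ImN; exact: is_deriveN.
Qed.

Lemma CD_ext c d c' : (forall t, c t = d t) -> CD c c' -> CD d c'.
Proof. by move=> e; have -> : d = c by apply/funext => t; rewrite e. Qed.

Lemma CD_eq c c1 c2 : CD c c1 -> c1 = c2 -> CD c c2.
Proof. by move=> H <-. Qed.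

Lemma CD_sqmod c c' : CD c c' ->
  is_derive (0:R) (1:R) (fun t => sqmod (c t))
    (2 * (Re (c 0) * Re c' + Im (c 0) * Im c')).
Proof.
move=> [H1 H2].
have -> : (fun t => sqmod (c t)) =
  (fun t => Re (c t)) * (fun t => Re (c t)) + (fun t => Im (c t)) * (fun t => Im (c t)).
  by apply/funext => t; rewrite /sqmod !expr2.
by apply: is_derive_eq; rewrite /= !sE; ring.
Qed.

Lemma rc0 : (0:R)%:C = 0 :> C. Proof. by []. Qed.

Lemma CD_main (s : R -> C) s' (p0 t0 r0 kP kT kR zL : C) : CD s s' -> s 0 = 0 ->
  t0 * r0 - p0 ^+ 2 != 0 ->
  CD (fun t => zL * (p0 + s t * kP) /
        ((t0 + s t * kT) * (r0 + s t * kR) - (p0 + s t * kP) ^+ 2))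
     (s' * (zL * (kP * (t0 * r0 - p0 ^+ 2)^-1 - p0 * (t0 * r0 - p0 ^+ 2)^-1 ^+ 2
        * (kT * r0 + t0 * kR - 2 * p0 * kP)))).
Proof.
move=> Hs s0 nz.
have HP := CD_add (CD_cst p0) (CD_mul Hs (CD_cst kP)).
have HT := CD_add (CD_cst t0) (CD_mul Hs (CD_cst kT)).
have HR := CD_add (CD_cst r0) (CD_mul Hs (CD_cst kR)).
have HD := CD_add (CD_mul HT HR) (CD_opp (CD_mul HP HP)).
have HD0 : (fun t => (t0 + s t * kT) * (r0 + s t * kR) + - ((p0 + s t * kP) * (p0 + s t * kP))) 0 != 0.
  by rewrite /= s0 !mul0r !addr0 -expr2.
have HI := CD_inv HD0 HD.
have Hf := CD_mul (CD_mul (CD_cst zL) HP) HI.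
apply: (CD_ext _ (CD_eq Hf _)).
  by move=> t /=; rewrite expr2.
rewrite /= s0 !mul0r !addr0 ?mulr0 ?add0r -?expr2.
move: nz; set D := t0 * r0 - p0 ^+ 2 => nz.
field.
exact: nz.
Qed.

Lemma CD_s (d : C) : CD (fun t => t%:C * 'i * (1 + t%:C * 'i * d)^-1) 'i.
Proof.
have H1 := CD_mul CD_id (CD_cst 'i).
have H2 := CD_add (CD_cst 1) (CD_mul H1 (CD_cst d)).
have nz : (fun t => 1 + t%:C * 'i * d) 0 != 0 by rewrite /= rc0 !mul0r addr0 oner_neq0.
apply: (CD_eq (CD_mul H1 (CD_inv nz H2))).
by rewrite /= rc0 ?mul0r ?mulr0 ?addr0 invr1 mulr1 mul1r.
Qed.

Lemma near_nz (d : C) : \forall t \near nbhs (0:R), 1 + t%:C * 'i * d != 0.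
Proof.
have pos : 0 < (`|Im d| + 1)^-1 :> R by rewrite invr_gt0 ltr_wpDl.
apply: filterS (nbhs0_lt pos) => t Ht.
apply/eqP => H; have := congr1 (@complex.Re R) H.
rewrite ReD ReM ReM /=.
have h1 : `|t| * (`|Im d| + 1) < 1.
  by rewrite -ltr_pdivlMr ?ltr_wpDl // div1r.
have h2 : t * Im d <= `|t| * `|Im d| by rewrite -normrM ler_norm.
have h3 : 0 <= `|t| by [].
move=> e. nra.
Qed.

Lemma final_eq (h e : C) :
  2 * (Re h * Re ('i * e) + Im h * Im ('i * e)) = 2 * Im (h * e^*).
Proof. by case: h => a b; case: e => p q /=; ring. Qed.
End All.

Theorem lemma1 (R : realType) (N : nat) (ZSS : 'M[R[i]]_N)
  (zG zL zTT zRR zTR : R[i]) (zTS zRS : 'rV[R[i]]_N) (zST zSR : 'cV[R[i]]_N)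
  (R0 : R) (x : 'rV[R]_N) :
  (0 < N)%N -> 0 <= R0 ->
  ZSE ZSS R0 x \in unitmx ->
  let Zi := invmx (ZSE ZSS R0 x) in
  let pTT := phi Zi zTT zTS zST in
  let pRR := phi Zi zRR zRS zSR in
  let pTR := phi Zi zTR zTS zSR in
  let zT := zG + pTT in
  let zR := zL + pRR in
  zT * zR - pTR ^+ 2 != 0 ->
  let a := (zT * zR - pTR ^+ 2)^-1 in
  let h := hE2E ZSS zG zL zTT zRR zTR zTS zRS zST zSR R0 x in
  let E := (zL * a) *: (Zi *m
             ((2 * a * pTR ^+ 2 + 1) *: (zSR *m zTS)
              - (a * pTR * zR) *: (zST *m zTS)
              - (a * pTR * zT) *: (zSR *m zRS)) *m Zi) in
  forall j : 'I_N,
    is_derive (0 : R) (1 : R)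
      (fun t : R => fE2E ZSS zG zL zTT zRR zTR zTS zRS zST zSR R0
                      (x + t *: delta_mx 0 j))
      (2 * complex.Im (h * (E j j)^*)).
Proof.
Proof.
move=> Npos R0pos Zu Zi pTT pRR pTR zT zR Dnz a h E j.
pose d := Zi j j.
pose uT := (zTS *m Zi) 0 j. pose uR := (zRS *m Zi) 0 j.
pose vT := (Zi *m zST) j 0. pose vR := (Zi *m zSR) j 0.
pose s := fun t : R => t%:C * 'i * (1 + t%:C * 'i * d)^-1.
have s0 : s 0 = 0 by rewrite /s rc0 !mul0r.
have Hh := @CD_main R s 'i pTR zT zR (uT * vR) (uT * vT) (uR * vR) zL (CD_s d) s0 Dnz.
have Hsq := CD_sqmod Hh.
apply: (near_eq_is_derive _ (is_derive_eq Hsq _)).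
  near=> t.
  have nz : 1 + t%:C * 'i * d != 0 by near: t; exact: near_nz.
  rewrite /fE2E /hE2E ZSE_shift sherman //.
  by rewrite !phi_shift /zT /zR !addrA.
have EE : E j j = zL * (uT * vR / (zT * zR - pTR ^+ 2) -
       pTR * (zT * zR - pTR ^+ 2)^-1 ^+ 2 *
       (uT * vT * zR + zT * (uR * vR) - 2 * pTR * (uT * vR))).
  rewrite /E mxE Ejj -/uT -/uR -/vT -/vR /a.
  field. exact: Dnz.
rewrite s0 !mul0r !addr0 -EE.
exact: final_eq.
Unshelve. all: by end_near. Qed.
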